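(* Let $P$ be a 6-stack whose rank $r(P)$ is a (positive) multiple of $3$. Then $P$ has a retract that is a 4-tower.
   Context: All posets are finite. For a poset $P$ and $p\in P$, the rank $r(p)$ of $p$ is the largest $m$ such that there is a chain $p_0<\dots<p_m=p$ in $P$. $P$ is ranked of rank $r(P)$ if every maximal chain has exactly $r(P)+1$ elements. For $0\le i\le j$, $P(i,j)=\{p\in P:i\le r(p)\le j\}$ (induced order). A subset $Q\subseteq P$ (induced order) is a retract of $P$ if there is an order-preserving $f:P\to Q$ with $f(q)=q$ for all $q\in Q$. The 6-crown $C_6$ is the poset on $\{x_0,x_1,x_2,y_0,y_1,y_2\}$ whose only strict comparabilities are $x_0<y_0>x_1<y_1>x_2<y_2>x_0$. A 6-stack is a ranked poset $P$ of rank $n\ge1$ such that $P(i,i+1)\cong C_6$ for each $0\le i<n$. The ordinal sum of posets $P_1,\dots,P_k$ ($k\ge1$) is their disjoint union ordered by the orders of the $P_i$ together with $p<q$ whenever $p\in P_i,q\in P_j,i<j$. A 4-tower is an ordinal sum of one or more two-element antichains. *)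

(* Defs.v *)
From mathcomp Require Import all_boot.
Set Implicit Arguments. Unset Strict Implicit. Unset Printing Implicit Defensive.

Section Posets.
Variable T : finType.
Variable le : rel T.

Definition is_poset : Prop :=
  [/\ forall x, le x x,
      forall x y, le x y -> le y x -> x = y &
      forall x y z, le x y -> le y z -> le x z].

Definition lt (x y : T) : bool := (x != y) && le x y.

Definition has_chain_to (p : T) (m : nat) : bool :=
  [exists s : (m.+1).-tuple T, sorted lt s && (last p s == p)].

(* r(p): the largest m such that there is a chain p_0 < ... < p_m = p
   (any such chain has m < #|T|, and m = 0 always works). *)
Definition rank (p : T) : nat :=
  \max_(m < #|T|) (if has_chain_to p m then nat_of_ord m else 0).

Definition is_chain (C : {set T}) : Prop :=
  forall x y, x \in C -> y \in C -> le x y || le y x.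

Definition maximal_chain (C : {set T}) : Prop :=
  is_chain C /\ forall D : {set T}, is_chain D -> C \subset D -> D = C.

Definition ranked_of_rank (n : nat) : Prop :=
  forall C : {set T}, maximal_chain C -> #|C| = n.+1.

Definition rank_slice (i j : nat) : {set T} :=
  [set p | i <= rank p <= j].

Definition sub_iso (S : {set T}) (U : finType) (leU : rel U) : Prop :=
  exists f : U -> T,
    [/\ injective f,
        forall u, f u \in S,
        forall x, x \in S -> exists u, f u = x &
        forall u v, le (f u) (f v) = leU u v].

Definition retract (Q : {set T}) : Prop :=
  exists f : T -> T,
    [/\ forall x, f x \in Q,
        forall x y, le x y -> le (f x) (f y) &
        forall q, q \in Q -> f q = q].
End Posets.

(* The 6-crown on bool * 'I_3: (false,i) = x_i, (true,j) = y_j;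
   x_i < y_j iff j = i or j + 1 = i (mod 3), i.e.
   x0<y0>x1<y1>x2<y2>x0. *)
Definition crown6_le (a b : bool * 'I_3) : bool :=
  (a == b) ||
  [&& ~~ a.1, b.1 & ((nat_of_ord b.2 == a.2) || ((b.2.+1 %% 3) == a.2))].

Definition six_stack (T : finType) (le : rel T) (n : nat) : Prop :=
  [/\ 1 <= n, ranked_of_rank le n &
      forall i, i < n -> sub_iso le (rank_slice le i i.+1) crown6_le].

(* ordinal sum of k two-element antichains, on 'I_k * bool *)
Definition tower_le (k : nat) (a b : 'I_k * bool) : bool :=
  (a == b) || (nat_of_ord a.1 < b.1).

Definition is_4tower (T : finType) (le : rel T) (Q : {set T}) : Prop :=
  exists k : nat, 1 <= k /\ sub_iso le Q (@tower_le k).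
Example crown6_sanity :
  [/\ crown6_le (false, inord 1) (true, inord 0),
      crown6_le (false, inord 0) (true, inord 2),
      ~~ crown6_le (false, inord 0) (true, inord 1) &
      ~~ crown6_le (true, inord 0) (false, inord 0)].
Proof. by split; rewrite /crown6_le /= ?inordK. Qed.

(* Main.v *)
From mathcomp Require Import all_boot zify.
Require Import Defs.
Set Implicit Arguments. Unset Strict Implicit. Unset Printing Implicit Defensive.

Ltac o3 x := case: x => [[|[|[|?]]] ?] //.
Definition o0 : 'I_3 := @Ordinal 3 0 isT.
Definition o1 : 'I_3 := @Ordinal 3 1 isT.
Definition o2 : 'I_3 := @Ordinal 3 2 isT.

Lemma cr_up a b b' : ~~ crown6_le (false,a) (true,b) -> ~~ crown6_le (false,a) (true,b') -> b = b'.
Proof. by o3 a; o3 b; o3 b' => _ _; apply/val_inj. Qed.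
Lemma cr_dn b a a' : ~~ crown6_le (false,a) (true,b) -> ~~ crown6_le (false,a') (true,b) -> a = a'.
Proof. by o3 a; o3 a'; o3 b => _ _; apply/val_inj. Qed.
Lemma cr_up_ex a : exists b, ~~ crown6_le (false,a) (true,b).
Proof. o3 a; [exists o1|exists o2|exists o0]; by []. Qed.
Lemma cr_dn_ex b : exists a, ~~ crown6_le (false,a) (true,b).
Proof. o3 b; [exists o2|exists o0|exists o1]; by []. Qed.
Lemma cr_two c : exists a a', [/\ a != a', crown6_le (false,a) (true,c) & crown6_le (false,a') (true,c)].
Proof. o3 c; [exists o0, o1|exists o1, o2|exists o2, o0]; by []. Qed.
Lemma cr_same a : crown6_le (false,a) (true,a).
Proof. by rewrite /crown6_le /= eqxx. Qed.
Lemma cr_below u a : crown6_le u (false,a) -> u = (false,a).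
Proof. by rewrite /crown6_le /= andbF orbF => /eqP. Qed.
Definition mle (i t j t' : nat) : bool :=
  ((i == j) && (t == t')) || ((j == i.+1) && (t != t')) || (i.+2 <= j).
Definition rl (i t : nat) : nat :=
  if i %% 3 == 0 then i
  else if i %% 3 == 1 then (if t == 2 then i else if t == 1 then i.-1 else i.+1)
  else (if t == 2 then i else if t == 0 then i.-1 else i.+1).
Definition rt (i t : nat) : nat :=
  if i %% 3 == 0 then (if t == 2 then 0 else t)
  else if i %% 3 == 1 then (if t == 2 then 2 else if t == 1 then 0 else 2)
  else (if t == 2 then 2 else if t == 0 then 2 else 0).
Definition Qm (i t : nat) : bool := if i %% 3 == 0 then t != 2 else t == 2.
Lemma r_mono i t j t' : t < 3 -> t' < 3 -> mle i t j t' ->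
  mle (rl i t) (rt i t) (rl j t') (rt j t').
Proof.
rewrite /mle /rl /rt.
by do ![case: ifP] => *; lia.
Qed.
Lemma r_Q i t : t < 3 -> Qm (rl i t) (rt i t).
Proof. rewrite /Qm /rl /rt. by do ![case: ifP] => *; lia. Qed.
Lemma r_id i t : t < 3 -> Qm i t -> rl i t = i /\ rt i t = t.
Proof. rewrite /Qm /rl /rt. by do ![case: ifP] => *; split; lia. Qed.
Lemma r_lt3 i t : t < 3 -> rt i t < 3.
Proof. rewrite /rt. by do ![case: ifP] => *; lia. Qed.
Lemma r_bound i t n : 3 %| n -> i <= n -> rl i t <= n.
Proof. rewrite /rl. by do ![case: ifP] => *; lia. Qed.
Definition twl (b : nat) (c : bool) := if odd b then 3 * b./2 + 1 + c else 3 * b./2.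
Definition twt (b : nat) (c : bool) := if odd b then 2 else nat_of_bool c.
Lemma tw_mle b c b' c' : mle (twl b c) (twt b c) (twl b' c') (twt b' c') = ((b == b') && (c == c')) || (b < b').
Proof. rewrite /mle /twl /twt. case: c; case: c'; do ![case: ifP] => *; lia. Qed.

Lemma tw_Q b c : Qm (twl b c) (twt b c).
Proof. rewrite /Qm /twl /twt; case: c; do ![case: ifP] => *; lia. Qed.
Lemma twt_lt b c : twt b c < 3.
Proof. rewrite /twt; case: c; do ![case: ifP] => *; lia. Qed.
Lemma tw_bound b c n : 3 %| n -> b < (n %/ 3).*2.+1 -> twl b c <= n.
Proof. rewrite /twl; case: c; do ![case: ifP] => *; lia. Qed.
Lemma tw_inv i t n : Qm i t -> t < 3 -> i <= n -> 3 %| n -> exists b c,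
  [/\ twl b c = i, twt b c = t & b < (n %/ 3).*2.+1].
Proof.
rewrite /Qm /twl /twt => hq ht hi hn.
case: ifP hq => h0 hq.
- exists (i %/ 3).*2, (t == 1); rewrite odd_double doubleK.
  case: (t =P 1) => [->|ne] /=; split; lia.
- exists (i %/ 3).*2.+1, (i %% 3 == 2); rewrite /= odd_double /= uphalf_double.
  case: (i %% 3 =P 2) => [e|ne] /=; split; lia.
Qed.
Section Abs.
Variables (T : finType) (le : rel T).
Hypothesis Hrefl : forall x, le x x.
Hypothesis Hanti : forall x y, le x y -> le y x -> x = y.
Hypothesis Htrans : forall x y z, le x y -> le y z -> le x z.
Local Notation ltT := (lt le).
Local Notation rk := (rank le).

Lemma lt_trans : transitive ltT.
Proof.
move=> y x z /andP[nxy lxy] /andP[nyz lyz]; apply/andP; split; last exact: Htrans lxy lyz.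
apply/eqP => exz; subst z; have exy := Hanti lxy lyz; by rewrite exy eqxx in nxy.
Qed.
Lemma lt_irr : irreflexive ltT.
Proof. by move=> x; rewrite /lt eqxx. Qed.

Lemma chainP p m : has_chain_to le p m <->
  exists s : seq T, [/\ size s = m.+1, sorted ltT s & last p s = p].
Proof.
split.
- case/existsP => s /andP[so /eqP la]; exists s; split => //; exact: size_tuple.
- case=> s [sz so la]; apply/existsP.
  have sz' : size s == m.+1 by apply/eqP.
  by exists (Tuple sz'); rewrite /= so la eqxx.
Qed.

Lemma chain_card s : sorted ltT s -> size s <= #|T|.
Proof.
move=> so; have u := sorted_uniq lt_trans lt_irr so.
rewrite -(card_uniqP u); exact: max_card.
Qed.

Lemma rank_ge p m : has_chain_to le p m -> m <= rk p.
Proof.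
move=> h; have [s [sz so _]] := (chainP p m).1 h.
have hm : m < #|T| by rewrite -sz; exact: chain_card.
have := @leq_bigmax _ (fun i : 'I_#|T| => if has_chain_to le p i then nat_of_ord i else 0) (Ordinal hm).
by rewrite /= h.
Qed.

Lemma rank_chain p : has_chain_to le p (rk p).
Proof.
have h0 : has_chain_to le p 0 by apply/chainP; exists [:: p].
have cT : 0 < #|'I_#|T| | by rewrite card_ord; apply/card_gt0P; exists p.
rewrite /rank; have [i ->] := @eq_bigmax _ (fun i : 'I_#|T| => if has_chain_to le p i then nat_of_ord i else 0) cT.
by case: ifP.
Qed.

Lemma rank_lt x y : ltT x y -> rk x < rk y.
Proof.
move=> lxy; have [s [sz so la]] := (chainP _ _).1 (rank_chain x).
apply: rank_ge; apply/chainP; exists (rcons s y); split.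
- by rewrite size_rcons sz.
- case: s sz so la => [//|a s] _ /= so la.
  by rewrite rcons_path so la.
- by rewrite last_rcons.
Qed.

Lemma rank_le x y : le x y -> rk x <= rk y.
Proof.
move=> lxy; case: (eqVneq x y) => [->//|nxy].
by apply: ltnW; apply: rank_lt; rewrite /lt nxy.
Qed.

Lemma rank_pred y : 0 < rk y -> exists x, ltT x y /\ rk x = (rk y).-1.
Proof.
move=> r0; have [s [sz so la]] := (chainP _ _).1 (rank_chain y).
move: sz so la; case/lastP: s => [//|s z]; rewrite size_rcons last_rcons => -[sz] so lz.
subst z; case: s sz so => [/= sz|a s sz so]; first by rewrite -sz in r0.
move: so; rewrite /= rcons_path => /andP[so lt1].
exists (last a s); split => //.
have h1 : (rk y).-1 <= rk (last a s).
  apply: rank_ge; apply/chainP; exists (a :: s); split => //.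
  by rewrite /= -sz.
have h2 := rank_lt lt1. lia.
Qed.

Definition chainb (C : {set T}) := [forall x in C, forall y in C, le x y || le y x].
Lemma chainbP C : reflect (is_chain le C) (chainb C).
Proof.
apply: (iffP forall_inP) => [h x y xC yC | h x xC].
- by move/forall_inP: (h x xC) => /(_ y yC).
- by apply/forall_inP => y yC; exact: h.
Qed.

Lemma ext_max C : is_chain le C -> exists D, maximal_chain le D /\ C \subset D.
Proof.
move=> /chainbP hC.
have P0 : chainb C && (C \subset C) by rewrite hC subxx.
have [D /andP[hD sCD] maxD] := @arg_maxnP _ C (fun D => chainb D && (C \subset D)) (fun D => #|D|) P0.
exists D; split => //; split; first exact/chainbP.
move=> E /chainbP hE sDE; apply/esym/eqP; rewrite eqEcard sDE /=.
by apply: maxD; rewrite hE (subset_trans sCD sDE).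
Qed.


Variable n : nat.
Hypothesis Hrk : ranked_of_rank le n.
Hypothesis Hsl : forall i, i < n -> sub_iso le (rank_slice le i i.+1) crown6_le.

Lemma rank_le_n p : rk p <= n.
Proof.
have [s [sz so la]] := (chainP _ _).1 (rank_chain p).
have u := sorted_uniq lt_trans lt_irr so.
set C := [set x in s].
have hC : is_chain le C.
  move=> x y; rewrite !inE => xs ys.
  have lts := sorted_ltn_nth lt_trans x so.
  case: (ltngtP (index x s) (index y s)) => h.
  - have := lts (index x s) (index y s); rewrite !inE !index_mem => /(_ xs ys h).
    by rewrite !nth_index // => /andP[_ ->].
  - have := lts (index y s) (index x s); rewrite !inE !index_mem => /(_ ys xs h).
    by rewrite !nth_index // => /andP[_ ->]; rewrite orbT.
  - have : nth x s (index x s) = nth x s (index y s) by rewrite h.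
    by rewrite !nth_index // => ->; rewrite Hrefl.
have [D [mD sCD]] := ext_max hC.
have hD := Hrk mD.
have := subset_leq_card sCD; rewrite hD cardsE (card_uniqP u) sz.
by [].
Qed.

Lemma crown_ranks i : i < n -> exists h : bool * 'I_3 -> T,
  [/\ injective h, forall a, rk (h (false,a)) = i, forall b, rk (h (true,b)) = i.+1,
      forall x, rk x = i -> exists a, x = h (false,a) &
      forall y, rk y = i.+1 -> exists b, y = h (true,b)] /\
  (forall u v, le (h u) (h v) = crown6_le u v).
Proof.
move=> lin; have [h [hinj hin hsurj hle]] := Hsl lin.
have hr u : i <= rk (h u) <= i.+1 by have := hin u; rewrite inE.
have rf a : rk (h (false,a)) = i.
  have /andP[r1 r2] := hr (false,a).
  apply/eqP; rewrite eqn_leq r1 andbT leqNgt; apply/negP => r3.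
  have [x [lx rx]] := rank_pred (leq_ltn_trans (leq0n i) r3).
  have xin : x \in rank_slice le i i.+1 by rewrite inE; apply/andP; split; lia.
  have [u hu] := hsurj x xin; subst x.
  move: lx; rewrite /lt hle => /andP[ne /cr_below eu].
  by rewrite eu eqxx in ne.
have rt b : rk (h (true,b)) = i.+1.
  have /andP[r1 r2] := hr (true,b).
  have : ltT (h (false,b)) (h (true,b)).
    by rewrite /lt hle cr_same andbT; apply/eqP => /hinj.
  move/rank_lt; rewrite rf; lia.
exists h; split => //; split => //.
- move=> x rx.
  have xin : x \in rank_slice le i i.+1 by rewrite inE rx leqnn leqnSn.
  have [[[] c] hc] := hsurj x xin; subst x; first by rewrite rt in rx; lia.
  by exists c.
- move=> y ry.
  have yin : y \in rank_slice le i i.+1 by rewrite inE ry leqnSn leqnn.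
  have [[[] c] hc] := hsurj y yin; subst y; last by rewrite rf in ry; lia.
  by exists c.
Qed.

Definition g x := odflt x [pick y | (rk y == (rk x).+1) && ~~ le x y].

Lemma g_spec x : rk x < n -> rk (g x) = (rk x).+1 /\ ~~ le x (g x).
Proof.
move=> xn; have [h [[hinj rf rt sf st] hle]] := crown_ranks xn.
have [a ea] := sf x erefl.
rewrite /g; case: pickP => [y /andP[/eqP -> ->] //|none].
have [b hb] := cr_up_ex a.
have := none (h (true,b)); rewrite rt eqxx /=.
by rewrite {1}ea hle hb.
Qed.

Lemma g_uniq x y : rk x < n -> rk y = (rk x).+1 -> ~~ le x y -> y = g x.
Proof.
move=> xn ry nle; have [h [[hinj rf rt sf st] hle]] := crown_ranks xn.
have [gr gn] := g_spec xn.
have [a ea] := sf x erefl.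
have [b eb] := st y ry.
have [b' eb'] := st (g x) gr.
rewrite eb eb'; congr h; congr pair; apply: (@cr_up a).
- by rewrite -hle -eb -ea.
- by rewrite -hle -eb' -ea.
Qed.

Lemma miss_uniq x x' y : rk x < n -> rk x' = rk x -> rk y = (rk x).+1 ->
  ~~ le x y -> ~~ le x' y -> x = x'.
Proof.
move=> xn rx' ry n1 n2; have [h [[hinj rf rt sf st] hle]] := crown_ranks xn.
have [a ea] := sf x erefl.
have [a' ea'] := sf x' rx'.
have [b eb] := st y ry.
rewrite ea ea'; congr h; congr pair; apply: (@cr_dn b).
- by rewrite -hle -eb -ea.
- by rewrite -hle -eb -ea'.
Qed.

Lemma miss_ex y : 0 < rk y -> exists x, rk x = (rk y).-1 /\ ~~ le x y.
Proof.
move=> y0; have yn := rank_le_n y.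
have xn : (rk y).-1 < n by lia.
have [h [[hinj rf rt sf st] hle]] := crown_ranks xn.
have [b eb] := st y (esym (ltn_predK y0)).
have [a ha] := cr_dn_ex b.
by exists (h (false,a)); rewrite rf eb hle.
Qed.

Lemma two_below z : 0 < rk z -> exists y y',
  [/\ y != y', rk y = (rk z).-1, rk y' = (rk z).-1, le y z & le y' z].
Proof.
move=> z0; have zn := rank_le_n z.
have xn : (rk z).-1 < n by lia.
have [h [[hinj rf rt sf st] hle]] := crown_ranks xn.
have [b eb] := st z (esym (ltn_predK z0)).
have [a [a' [ne h1 h2]]] := cr_two b.
exists (h (false,a)), (h (false,a')); rewrite !rf eb !hle h1 h2; split => //.
by apply/eqP => /hinj [] /eqP; apply/negP.
Qed.

Lemma le_far_aux d : forall x z, rk z = rk x + 2 + d -> le x z.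
Proof.
elim: d => [|d IH] x z rz.
- have [y [y' [ne ry ry' ly ly']]] := two_below (ltac:(lia) : 0 < rk z).
  have xn : rk x < n by have := rank_le_n z; lia.
  case lxy: (le x y); first exact: Htrans lxy ly.
  case lxy': (le x y'); first exact: Htrans lxy' ly'.
  have e1 := g_uniq xn (ltac:(lia) : rk y = (rk x).+1) (negbT lxy).
  have e2 := g_uniq xn (ltac:(lia) : rk y' = (rk x).+1) (negbT lxy').
  by rewrite e1 e2 eqxx in ne.
- have [y [y' [ne ry ry' ly ly']]] := two_below (ltac:(lia) : 0 < rk z).
  apply: Htrans (IH x y _) ly; lia.
Qed.

Lemma le_far x z : rk x + 2 <= rk z -> le x z.
Proof. move=> h; apply: (@le_far_aux (rk z - (rk x + 2))); lia. Qed.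

Variable c : 'I_3 -> T.
Hypothesis c_inj : injective c.
Hypothesis c_rk : forall t, rk (c t) = 0.
Hypothesis c_surj : forall x, rk x = 0 -> exists t, x = c t.

Definition phi (i : nat) (t : 'I_3) := iter i g (c t).

Lemma phi_rk i t : i <= n -> rk (phi i t) = i.
Proof.
elim: i => [|i IH] hi /=; first exact: c_rk.
have r := IH (ltnW hi); have [-> _] := g_spec (ltac:(lia) : rk (phi i t) < n).
by rewrite r.
Qed.

Lemma phi_inj i t t' : i <= n -> phi i t = phi i t' -> t = t'.
Proof.
elim: i => [|i IH] hi /=; first exact: c_inj.
move=> e; apply: IH; first exact: ltnW.
have r := phi_rk t (ltnW hi); have r' := phi_rk t' (ltnW hi).
have [g1 n1] := g_spec (ltac:(lia) : rk (phi i t) < n).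
have [g2 n2] := g_spec (ltac:(lia) : rk (phi i t') < n).
apply: (@miss_uniq _ _ (g (phi i t))) => //; try lia.
by rewrite e.
Qed.

Lemma phi_surj_aux i : forall x, rk x = i -> exists t, phi i t = x.
Proof.
elim: i => [|i IH] x rx.
- by have [t ->] := c_surj rx; exists t.
- have [w [rw nw]] := miss_ex (ltac:(lia) : 0 < rk x).
  rewrite rx /= in rw.
  have [t et] := IH w rw.
  exists t => /=; rewrite et; symmetry; apply: g_uniq => //.
  + have := rank_le_n x; lia.
  + lia.
Qed.

Lemma phi_surj x : exists t, phi (rk x) t = x.
Proof. exact: phi_surj_aux. Qed.

Lemma phi_le i t j t' : i <= n -> j <= n -> le (phi i t) (phi j t') = mle i t j t'.
Proof.
move=> hi hj; have ri := phi_rk t hi; have rj := phi_rk t' hj.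
case E1: (i.+2 <= j).
  rewrite /mle E1 !orbT; apply: le_far; lia.
case E2: (j == i.+1).
  move/eqP: E2 => E2; subst j.
  have [_ ng] := g_spec (ltac:(lia) : rk (phi i t) < n).
  case: (t =P t') => [<-|ne].
    by rewrite /= (negbTE ng) /mle; apply/esym/negbTE; lia.
  have -> : mle i t i.+1 t'.
    rewrite /mle eqxx /=; apply/orP; left; apply/orP; right; apply/eqP => /val_inj; exact: ne.
  case nl: (le (phi i t) (phi i.+1 t')) => //; exfalso; apply: ne.
  have e := g_uniq (ltac:(lia) : rk (phi i t) < n) (ltac:(lia) : rk (phi i.+1 t') = (rk (phi i t)).+1) (negbT nl).
  apply: (@phi_inj i.+1) => //; by rewrite e.
case E3: (i == j).
  move/eqP: E3 => E3; subst j.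
  case: (t =P t') => [<-|ne].
    by rewrite Hrefl /mle !eqxx.
  have -> : mle i t i t' = false.
    rewrite /mle eqxx /=. have : (t : nat) != t' by apply/eqP => /val_inj. lia.
  apply/negP => l; apply: ne; apply: (@phi_inj i) => //.
  case: (eqVneq (phi i t) (phi i t')) => // nx.
  have := rank_lt (ltac:(by rewrite /lt nx l) : ltT (phi i t) (phi i t')); lia.
have -> : mle i t j t' = false by rewrite /mle; lia.
apply/negP => l; have := rank_le l; lia.
Qed.

Hypothesis H3 : 3 %| n.

Definition thr x : 'I_3 := odflt ord0 [pick t | phi (rk x) t == x].

Lemma phi_thr x : phi (rk x) (thr x) = x.
Proof.
rewrite /thr; case: pickP => [t /eqP //|none].
have [t et] := phi_surj x; by have := none t; rewrite et eqxx.
Qed.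

Lemma thr_phi i t : i <= n -> rk (phi i t) = i /\ thr (phi i t) = t.
Proof.
move=> hi; have r := phi_rk t hi; split => //.
apply: (@phi_inj i) => //; rewrite -{1}r; exact: phi_thr.
Qed.

Definition F x := phi (rl (rk x) (thr x)) (inord (rt (rk x) (thr x))).
Definition Q := [set x | Qm (rk x) (thr x)].

Lemma F_bound x : rl (rk x) (thr x) <= n.
Proof. apply: r_bound => //; exact: rank_le_n. Qed.

Lemma rt_val x : (inord (rt (rk x) (thr x)) : 'I_3) = rt (rk x) (thr x) :> nat.
Proof. by rewrite inordK // r_lt3. Qed.

Lemma retract_Q : retract le Q.
Proof.
exists F; split.
- move=> x; rewrite inE /F.
  have [-> ->] := thr_phi (inord (rt (rk x) (thr x))) (F_bound x).
  rewrite rt_val; apply: r_Q; exact: ltn_ord.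
- move=> x y lxy.
  rewrite /F phi_le ?F_bound // !rt_val.
  apply: r_mono; try exact: ltn_ord.
  by rewrite -phi_le ?rank_le_n // !phi_thr.
- move=> q; rewrite inE => hq.
  have [e1 e2] := r_id (ltn_ord (thr q)) hq.
  rewrite /F e1; have -> : (inord (rt (rk q) (thr q)) : 'I_3) = thr q.
    by apply/val_inj; rewrite /= e2 inordK.
  exact: phi_thr.
Qed.

Definition tw (u : 'I_((n %/ 3).*2.+1) * bool) : T := phi (twl u.1 u.2) (inord (twt u.1 u.2)).

Lemma tw_le u v : le (tw u) (tw v) = tower_le u v.
Proof.
case: u v => [b cb] [b' cb'].
rewrite /tw /= phi_le ?tw_bound ?ltn_ord // !inordK ?twt_lt // tw_mle.
by rewrite /tower_le /= -pair_eqE /=.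
Qed.

Lemma tower_Q : is_4tower le Q.
Proof.
exists (n %/ 3).*2.+1; split => //.
exists tw; split.
- move=> u v e.
  have h1 : tower_le u v by rewrite -tw_le e Hrefl.
  have h2 : tower_le v u by rewrite -tw_le e Hrefl.
  move: h1 h2; rewrite /tower_le.
  case: (eqVneq u v) => //= _ h1 h2.
  by have := ltn_trans h1 h2; rewrite ltnn.
- case=> b cb; rewrite inE /tw /=.
  have [-> ->] := thr_phi (inord (twt b cb)) (tw_bound cb H3 (ltn_ord b)).
  by rewrite inordK ?twt_lt // tw_Q.
- move=> x; rewrite inE => hq.
  have [b [cb [e1 e2 hb]]] := tw_inv hq (ltn_ord _) (rank_le_n x) H3.
  exists (Ordinal hb, cb); rewrite /tw /= e1.
  have -> : (inord (twt b cb) : 'I_3) = thr x by apply/val_inj; rewrite /= e2 inordK.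
  exact: phi_thr.
- exact: tw_le.
Qed.

Lemma main_sec : exists Q : {set T}, retract le Q /\ is_4tower le Q.
Proof. exists Q; split; [exact: retract_Q | exact: tower_Q]. Qed.
End Abs.

Theorem corollary5p10 (T : finType) (le : rel T) (n : nat) :
  is_poset le -> six_stack le n -> 3 %| n ->
  exists Q : {set T}, retract le Q /\ is_4tower le Q.
Proof.
move=> [Hr Ha Ht] [Hn1 Hrk Hsl] H3.
have [h [[hinj rf rt sf st] hle]] := crown_ranks Ha Ht Hsl Hn1.
apply: (@main_sec T le Hr Ha Ht n Hrk Hsl (fun t => h (false, t))) => //.
all: first [by move=> a b /hinj [] | by move=> x /sf].
Qed.
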